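(* Let $\mathscr{C}=\left\{\sum_{i=1}^{\infty} t_i 3^{-i} : t_i\in\{0,2\}\right\}$ be the middle-third Cantor set and $\mathscr{C}^{(2)}=\{x^2 : x\in\mathscr{C}\}$. For every integer $k\geq 2$, the interval \[\left[\tfrac{36}{81}+\tfrac{8}{9}\cdot\tfrac{1}{3^{2k}}+\tfrac{1}{3^{2k}},\ \tfrac{36}{81}+\tfrac{4}{3^{2k+1}}+\tfrac{1}{3^{4k}}+\tfrac{2}{3^{2k}}+\tfrac{4}{9}\cdot\tfrac{1}{3^{2k}}\right]\] is contained in $\mathscr{C}^{(2)}+\mathscr{C}^{(2)}+\mathscr{C}^{(2)}+\mathscr{C}^{(2)}=\{y_1+y_2+y_3+y_4 : y_j\in\mathscr{C}^{(2)}\}$. *)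

(* Defs.v *)
From Stdlib Require Import Reals.
Open Scope R_scope.

(* Middle-third Cantor set: x = sum_{i>=1} t_i 3^{-i}, t_i in {0,2}.
   Digit sequence indexed from 0: t n is the digit t_{n+1}. *)
Definition Cantor (x : R) : Prop :=
  exists t : nat -> R,
    (forall n, t n = 0 \/ t n = 2) /\
    infinite_sum (fun n => t n / 3 ^ (S n)) x.

Definition CantorSq (y : R) : Prop := exists x, Cantor x /\ y = x ^ 2.

Definition CantorSq4 (z : R) : Prop :=
  exists y1 y2 y3 y4, CantorSq y1 /\ CantorSq y2 /\ CantorSq y3 /\ CantorSq y4 /\
    z = y1 + y2 + y3 + y4.

(* Main.v *)
Require Import Defs.
From Stdlib Require Import Reals Lra Lia Psatz Arith.
Open Scope R_scope.

Lemma sum_shift (t : nat -> R) (d0 : R) n :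
  sum_f_R0 (fun i => (match i with 0 => d0 | S j => t j end) / 3 ^ S i) (S n)
  = d0/3 + sum_f_R0 (fun i => t i / 3 ^ S i) n / 3.
Proof.
  induction n.
  - simpl. field.
  - rewrite (tech5 _ (S n)), IHn. simpl. field. apply pow_nonzero; lra.
Qed.

Lemma cantor_prepend d0 x : (d0 = 0 \/ d0 = 2) -> Cantor x -> Cantor (d0/3 + x/3).
Proof.
  intros Hd [t [Ht Hs]].
  exists (fun i => match i with 0 => d0 | S j => t j end). split.
  - intros [|n]; auto.
  - intros eps He. destruct (Hs (3*eps)) as [N HN]; [lra|].
    exists (S N). intros [|m] Hm; [lia|].
    rewrite sum_shift. unfold Rdist in *.
    specialize (HN m ltac:(lia)).
    replace (d0 / 3 + sum_f_R0 (fun i : nat => t i / 3 ^ S i) m / 3 - (d0 / 3 + x / 3))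
      with ((sum_f_R0 (fun i : nat => t i / 3 ^ S i) m - x)/3) by field.
    unfold Rdiv; rewrite Rabs_mult, (Rabs_right (/3)) by (apply Rle_ge, Rlt_le, Rinv_0_lt_compat; lra). lra.
Qed.

Lemma cantor0 : Cantor 0.
Proof.
  exists (fun _ => 0). split; [auto|].
  intros eps He. exists 0%nat. intros n _.
  assert (E : forall m, sum_f_R0 (fun i : nat => 0 / 3 ^ S i) m = 0).
  { induction m; [simpl; field|]. rewrite tech5, IHm. field. apply pow_nonzero. lra. }
  cbv beta. rewrite E. unfold Rdist. rewrite Rminus_0_r, Rabs_R0. lra.
Qed.

Lemma cantor_div3 x : Cantor x -> Cantor (x/3).
Proof. intros H. replace (x/3) with (0/3 + x/3) by field. apply cantor_prepend; auto. Qed.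

Lemma cantor_divpow x m : Cantor x -> Cantor (x / 3^m).
Proof.
  intros H. induction m.
  - simpl. replace (x/1) with x by field. auto.
  - replace (x / 3 ^ S m) with ((x/3^m)/3). apply cantor_div3; auto.
    simpl. field. apply pow_nonzero; lra.
Qed.

Fixpoint qs (b : nat -> bool) (n : nat) : R :=
  match n with 0 => 0 | S m => qs b m + (if b m then 2 else 0) / 3 ^ S m end.

Lemma pow3_pos n : 0 < 3 ^ n.
Proof. apply pow_lt. lra. Qed.

Lemma qs_mono b n : qs b n <= qs b (S n).
Proof. cbn [qs]. pose proof (pow3_pos (S n)). destruct (b n).
  - assert (0 < 2 / 3 ^ S n) by (apply Rdiv_lt_0_compat; lra). lra.
  - unfold Rdiv. rewrite Rmult_0_l. lra. Qed.

Lemma qs_top b n : qs b (S n) + / 3 ^ S n <= qs b n + / 3 ^ n.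
Proof. cbn [qs]. pose proof (pow3_pos n). destruct (b n).
  - apply Req_le. simpl. field. lra.
  - assert (/ (3 ^ S n) <= / 3^n). { apply Rinv_le_contravar; simpl; lra. }
    unfold Rdiv. rewrite Rmult_0_l. lra. Qed.

Lemma qs_mono_le b n m : (n <= m)%nat -> qs b n <= qs b m.
Proof. induction 1; [lra|]. pose proof (qs_mono b m). lra. Qed.

Lemma qs_top_le b n m : (n <= m)%nat -> qs b m + / 3 ^ m <= qs b n + / 3 ^ n.
Proof. induction 1; [lra|]. pose proof (qs_top b m). lra. Qed.

Lemma qs_bound b n m : qs b m <= qs b n + / 3 ^ n.
Proof.
  destruct (le_lt_dec n m).
  - pose proof (qs_top_le b n m l). pose proof (pow3_pos m).
    assert (0 < / 3^m) by (apply Rinv_0_lt_compat; lra). lra.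
  - pose proof (qs_mono_le b m n ltac:(lia)). pose proof (pow3_pos n).
    assert (0 < / 3^n) by (apply Rinv_0_lt_compat; lra). lra.
Qed.

Lemma cantor_of_digits b : exists c, Cantor c /\ forall n, qs b n <= c <= qs b n + / 3 ^ n.
Proof.
  set (t := fun n => if b n then 2 else 0).
  assert (Hs : forall n, sum_f_R0 (fun i => t i / 3 ^ S i) n = qs b (S n)).
  { induction n. - simpl; unfold t. destruct (b 0%nat); simpl; field.
    - rewrite tech5, IHn. cbn [qs]. unfold t. reflexivity. }
  destruct (growing_cv (fun n => qs b (S n))) as [c Hc].
  - intros n. apply qs_mono.
  - exists (qs b 0 + / 3 ^ 0). intros r [i ->]. apply qs_bound.
  - exists c. split.
    + exists t. split. { intros n; unfold t; destruct (b n); auto. }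
      intros eps He. destruct (Hc eps He) as [N HN]. exists N. intros n Hn.
      rewrite Hs. apply HN; auto.
    + intros n. split.
      * pose proof (growing_ineq (fun n => qs b (S n)) c (fun n => qs_mono b (S n)) Hc n).
        cbv beta in H. pose proof (qs_mono b n). lra.
      * destruct (Rle_dec c (qs b n + / 3 ^ n)) as [|Hn]; auto.
        exfalso. destruct (Hc (c - (qs b n + / 3 ^ n))) as [N HN]; [lra|].
        specialize (HN N ltac:(lia)). pose proof (qs_bound b n (S N)).
        unfold Rdist in HN. apply Rabs_def2 in HN. lra.
Qed.

Definition phi e x := 3*x + e*x^2.
Definition psi x := x + x^2/4.
Definition G e c d2 d3 := phi e c + psi d2 + psi d3.
Definition off (b : bool) u := if b then 2*u else 0.
Definition Gl e q p2 p3 u (c : bool*bool*bool) :=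
  let '(b1,b2,b3) := c in G e (q + off b1 u) (p2 + off b2 u) (p3 + off b3 u).
Definition Gh e q p2 p3 u (c : bool*bool*bool) :=
  let '(b1,b2,b3) := c in G e (q + off b1 u + u) (p2 + off b2 u + u) (p3 + off b3 u + u).

Definition choose e w q p2 p3 u : bool*bool*bool :=
  if Rle_dec w (Gh e q p2 p3 u (false,false,false)) then (false,false,false) else
  if Rle_dec w (Gh e q p2 p3 u (false,false,true)) then (false,false,true) else
  if Rle_dec w (Gh e q p2 p3 u (false,true,false)) then (false,true,false) else
  if Rle_dec w (Gh e q p2 p3 u (false,true,true)) then (false,true,true) else
  if Rle_dec w (Gh e q p2 p3 u (true,false,false)) then (true,false,false) else
  if Rle_dec w (Gh e q p2 p3 u (true,false,true)) then (true,false,true) else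
  if Rle_dec w (Gh e q p2 p3 u (true,true,false)) then (true,true,false) else
  (true,true,true).

Section Ov.
Variables e q p2 p3 u : R.
Hypotheses (He0 : 0 <= e) (He1 : e <= 1) (Hq : 0 <= q) (Hp2 : 0 <= p2) (Hp3 : 0 <= p3)
  (Hu : 0 < u) (Hq1 : q + 3*u <= 1) (Hp21 : p2 + 3*u <= 1) (Hp31 : p3 + 3*u <= 1).

Ltac ov := unfold Gl, Gh, G, phi, psi, off; simpl;
  pose proof (Rmult_le_pos _ _ He0 Hq); pose proof (Rmult_le_pos _ _ (Rlt_le _ _ Hu) Hp2);
  pose proof (Rmult_le_pos _ _ (Rlt_le _ _ Hu) Hp3); pose proof (Rmult_le_pos _ _ (Rlt_le _ _ Hu) Hq);
  pose proof (Rmult_le_pos _ _ He0 (Rlt_le _ _ Hu)); nra.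

Lemma ov1 b : Gl e q p2 p3 u (b,false,true) <= Gh e q p2 p3 u (b,false,false).
Proof. destruct b; ov. Qed.
Lemma ov2 b : Gl e q p2 p3 u (b,true,false) <= Gh e q p2 p3 u (b,false,true).
Proof. destruct b; ov. Qed.
Lemma ov3 b : Gl e q p2 p3 u (b,true,true) <= Gh e q p2 p3 u (b,true,false).
Proof. destruct b; ov. Qed.
Lemma ov4 : Gl e q p2 p3 u (true,false,false) <= Gh e q p2 p3 u (false,true,true).
Proof. ov. Qed.
End Ov.

Lemma choose_ok e q p2 p3 u w :
  0 <= e -> e <= 1 -> 0 <= q -> 0 <= p2 -> 0 <= p3 -> 0 < u ->
  q + 3*u <= 1 -> p2 + 3*u <= 1 -> p3 + 3*u <= 1 ->
  G e q p2 p3 <= w -> w <= G e (q+3*u) (p2+3*u) (p3+3*u) ->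
  Gl e q p2 p3 u (choose e w q p2 p3 u) <= w <= Gh e q p2 p3 u (choose e w q p2 p3 u).
Proof.
  intros. 
  assert (E0 : Gl e q p2 p3 u (false,false,false) = G e q p2 p3).
  { unfold Gl, off. rewrite !Rplus_0_r. reflexivity. }
  assert (E1 : Gh e q p2 p3 u (true,true,true) = G e (q+3*u) (p2+3*u) (p3+3*u)).
  { unfold Gh, off. replace (q + 2*u + u) with (q+3*u) by ring. replace (p2 + 2*u + u) with (p2+3*u) by ring. replace (p3 + 2*u + u) with (p3+3*u) by ring. reflexivity. }
  assert (O1 : forall b, Gl e q p2 p3 u (b,false,true) <= Gh e q p2 p3 u (b,false,false)) by (intro; eapply ov1; eauto).
  assert (O2 : forall b, Gl e q p2 p3 u (b,true,false) <= Gh e q p2 p3 u (b,false,true)) by (intro; eapply ov2; eauto).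
  assert (O3 : forall b, Gl e q p2 p3 u (b,true,true) <= Gh e q p2 p3 u (b,true,false)) by (intro; eapply ov3; eauto).
  assert (O4 : Gl e q p2 p3 u (true,false,false) <= Gh e q p2 p3 u (false,true,true)) by (eapply ov4; eauto).
  pose proof (O1 true). pose proof (O1 false).
  pose proof (O2 true). pose proof (O2 false).
  pose proof (O3 true). pose proof (O3 false).
  unfold choose.
  repeat (destruct Rle_dec; [split; [lra|assumption]|]).
  lra.
Qed.

Fixpoint st e w n : R*R*R :=
  match n with
  | O => (0,0,0)
  | S m => let '(q,p2,p3) := st e w m in let u := / 3 ^ S m in
           let '(b1,b2,b3) := choose e w q p2 p3 u in
           (q + off b1 u, p2 + off b2 u, p3 + off b3 u)
  end.

Definition dig1 e w n := let '(q,p2,p3) := st e w n in let '(b1,_,_) := choose e w q p2 p3 (/3^S n) in b1.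
Definition dig2 e w n := let '(q,p2,p3) := st e w n in let '(_,b2,_) := choose e w q p2 p3 (/3^S n) in b2.
Definition dig3 e w n := let '(q,p2,p3) := st e w n in let '(_,_,b3) := choose e w q p2 p3 (/3^S n) in b3.

Lemma off_eq b n : off b (/ 3 ^ S n) = (if b then 2 else 0) / 3 ^ S n.
Proof. destruct b; unfold off; field; apply pow_nonzero; lra. Qed.

Lemma st_qs e w n : let '(q,p2,p3) := st e w n in
  q = qs (dig1 e w) n /\ p2 = qs (dig2 e w) n /\ p3 = qs (dig3 e w) n.
Proof.
  induction n; [simpl; auto|].
  cbn [qs]. unfold dig1 at 2; unfold dig2 at 2; unfold dig3 at 2. cbn [st].
  destruct (st e w n) as [[q p2] p3].
  destruct (choose e w q p2 p3 (/ 3 ^ S n)) as [[b1 b2] b3].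
  destruct IHn as [-> [-> ->]]. rewrite !off_eq. auto.
Qed.

Lemma st_inv e w n : 0 <= e -> e <= 1 -> 0 <= w -> w <= G e 1 1 1 ->
  let '(q,p2,p3) := st e w n in
  0 <= q /\ 0 <= p2 /\ 0 <= p3 /\ q + /3^n <= 1 /\ p2 + /3^n <= 1 /\ p3 + /3^n <= 1 /\
  G e q p2 p3 <= w /\ w <= G e (q + /3^n) (p2 + /3^n) (p3 + /3^n).
Proof.
  intros He0 He1 Hw0 Hw1. induction n.
  - simpl. rewrite Rinv_1, !Rplus_0_l.
    assert (G e 0 0 0 = 0) by (unfold G, phi, psi; field). lra.
  - cbn [st]. destruct (st e w n) as [[q p2] p3].
    destruct IHn as (H1 & H2 & H3 & H4 & H5 & H6 & H7 & H8).
    set (u := / 3 ^ S n).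
    assert (Hu : 0 < u) by (apply Rinv_0_lt_compat, pow3_pos).
    assert (E : / 3 ^ n = 3 * u).
    { unfold u. simpl. field. apply pow_nonzero; lra. }
    rewrite E in *.
    pose proof (choose_ok e q p2 p3 u w He0 He1 H1 H2 H3 Hu H4 H5 H6 H7 H8) as HC.
    destruct (choose e w q p2 p3 u) as [[b1 b2] b3]. simpl in HC.
    assert (forall b, 0 <= off b u /\ off b u <= 2*u) by (intros []; unfold off; lra).
    pose proof (H b1). pose proof (H b2). pose proof (H b3).
    repeat split; try lra.
Qed.

Lemma G_mono e a a' b b' c c' : 0 <= e -> 0 <= a <= a' -> 0 <= b <= b' -> 0 <= c <= c' ->
  G e a b c <= G e a' b' c'.
Proof. intros. unfold G, phi, psi.
  assert (e*a^2 <= e*a'^2) by (apply Rmult_le_compat_l; [lra|]; simpl; nra). nra. Qed.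

Lemma G_diff e q p2 p3 h : 0 <= e -> e <= 1 -> 0 <= q -> 0 <= p2 -> 0 <= p3 -> 0 < h ->
  q + h <= 1 -> p2 + h <= 1 -> p3 + h <= 1 ->
  G e (q+h) (p2+h) (p3+h) - G e q p2 p3 <= 8 * h.
Proof. intros. unfold G, phi, psi.
  pose proof (Rmult_le_pos _ _ H H1). pose proof (Rmult_le_pos _ _ H (Rlt_le _ _ H4)). nra. Qed.

Lemma small_zero x : (forall n, Rabs x <= 8 / 3 ^ n) -> x = 0.
Proof.
  intros H. destruct (Req_dec x 0) as [|Hx]; auto. exfalso.
  assert (Hp : 0 < Rabs x / 8) by (apply Rdiv_lt_0_compat; [apply Rabs_pos_lt|]; lra).
  destruct (pow_lt_1_zero (/3) ltac:(rewrite Rabs_right; lra) _ Hp) as [N HN].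
  specialize (HN N ltac:(lia)). specialize (H N). rewrite pow_inv in HN.
  pose proof (pow3_pos N). rewrite Rabs_right in HN.
  - unfold Rdiv in *. assert (Rabs x * / 8 * 8 = Rabs x) by field. 
    assert (8 * / 3 ^ N < Rabs x * / 8 * 8) by lra. lra.
  - apply Rle_ge, Rlt_le, Rinv_0_lt_compat; lra.
Qed.

Theorem key e w : 0 <= e -> e <= 1 -> 0 <= w -> w <= G e 1 1 1 ->
  exists c d2 d3, Cantor c /\ Cantor d2 /\ Cantor d3 /\ G e c d2 d3 = w.
Proof.
  intros He0 He1 Hw0 Hw1.
  destruct (cantor_of_digits (dig1 e w)) as [c [Hc Bc]].
  destruct (cantor_of_digits (dig2 e w)) as [d2 [Hd2 Bd2]].
  destruct (cantor_of_digits (dig3 e w)) as [d3 [Hd3 Bd3]].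
  exists c, d2, d3. repeat split; auto.
  cut (G e c d2 d3 - w = 0); [lra|]. apply small_zero. intros n.
  pose proof (st_inv e w n He0 He1 Hw0 Hw1) as HI. pose proof (st_qs e w n) as HQ.
  destruct (st e w n) as [[q p2] p3].
  destruct HQ as (-> & -> & ->).
  destruct HI as (H1 & H2 & H3 & H4 & H5 & H6 & H7 & H8).
  specialize (Bc n). specialize (Bd2 n). specialize (Bd3 n).
  assert (Hh : 0 < / 3 ^ n) by (apply Rinv_0_lt_compat, pow3_pos).
  set (a1 := qs (dig1 e w) n) in *. set (a2 := qs (dig2 e w) n) in *. set (a3 := qs (dig3 e w) n) in *.
  pose proof (G_mono e a1 c a2 d2 a3 d3 He0 ltac:(lra) ltac:(lra) ltac:(lra)).
  pose proof (G_mono e c (a1 + /3^n) d2 (a2 + /3^n) d3 (a3 + /3^n) He0 ltac:(lra) ltac:(lra) ltac:(lra)).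
  pose proof (G_diff e _ _ _ _ He0 He1 H1 H2 H3 Hh H4 H5 H6).
  unfold Rdiv. apply Rabs_le. lra.
Qed.

Theorem mainTheorem3 (k : nat) (hk : (2 <= k)%nat) (z : R) :
  36/81 + (8/9) * (1 / 3 ^ (2*k)) + 1 / 3 ^ (2*k) <= z ->
  z <= 36/81 + 4 / 3 ^ (2*k+1) + 1 / 3 ^ (4*k) + 2 / 3 ^ (2*k)
         + (4/9) * (1 / 3 ^ (2*k)) ->
  CantorSq4 z.
Proof.
  intros Hlo Hhi.
  set (B := 3 ^ k). assert (HB : 1 <= B) by (apply pow_R1_Rle; lra).
  assert (HB9 : 9 <= B).
  { unfold B. replace k with (2 + (k-2))%nat by lia. rewrite pow_add.
    assert (1 <= 3 ^ (k-2)) by (apply pow_R1_Rle; lra). simpl. lra. }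
  set (m := (2*k-1)%nat).
  assert (EA : 3 ^ (2*k) = B*B) by (replace (2*k)%nat with (k+k)%nat by lia; rewrite pow_add; reflexivity).
  assert (EA1 : 3 ^ (2*k+1) = B*B*3) by (rewrite pow_add, EA; simpl; ring).
  assert (EA2 : 3 ^ (4*k) = B*B*(B*B)) by (replace (4*k)%nat with (2*k+2*k)%nat by lia; rewrite pow_add, EA; ring).
  assert (EAm : 3 ^ (2*k) = 3 * 3 ^ m) by (replace (2*k)%nat with (S m) by lia; reflexivity).
  rewrite EA1, EA2, EA in *.
  set (A := B*B) in *. assert (HA : 1 <= A) by (unfold A; nra).
  set (a := / A). assert (Ha : A * a = 1) by (unfold a; field; lra).
  assert (Ha0 : 0 < a) by (unfold a; apply Rinv_0_lt_compat; lra).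
  assert (Ha1 : a <= /81) by (unfold a; apply Rinv_le_contravar; unfold A; nra).
  set (e := 9*a/4). set (w := (z - 4/9) * 9 * A / 4 - 3).
  assert (Hlo' : 17/9 * a <= z - 4/9).
  { replace (1 / A) with a in Hlo by (unfold a; field; lra). lra. }
  assert (Hhi' : z - 4/9 <= 34/9 * a + a * a).
  { replace (4 / (A*3)) with (4/3*a) in Hhi by (unfold a; field; lra).
    replace (1 / (A*A)) with (a*a) in Hhi by (unfold a; field; lra).
    replace (2 / A) with (2*a) in Hhi by (unfold a; field; lra).
    replace (1 / A) with a in Hhi by (unfold a; field; lra). lra. }
  assert (Hw0 : 0 <= w).
  { unfold w. assert (17/9*a*A <= (z-4/9)*A) by (apply Rmult_le_compat_r; lra).
    replace (17/9*a*A) with (17/9) in H by (rewrite Rmult_assoc, (Rmult_comm a), Ha; ring). lra. }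
  assert (Hw1 : w <= G e 1 1 1).
  { unfold w, G, phi, psi, e.
    assert ((z-4/9)*A <= (34/9 * a + a * a)*A) by (apply Rmult_le_compat_r; lra).
    replace ((34/9 * a + a * a)*A) with (34/9 + a) in H by
      (replace ((34/9 * a + a * a)*A) with (34/9*(A*a) + a*(A*a)) by ring; rewrite Ha; ring). lra. }
  destruct (key e w ltac:(unfold e; lra) ltac:(unfold e; lra) Hw0 Hw1) as (c & d2 & d3 & Hc & Hd2 & Hd3 & Hg).
  assert (Hz : z = 4/9 + 4*(w+3)/(9*A)) by (unfold w; field; lra).
  exists ((2/3 + c/A)^2), (((2/3 + d2/3)/B)^2), (((2/3 + d3/3)/B)^2), (((2/3 + 0/3)/B)^2).
  repeat split.
  - exists (2/3 + c/A). split; [|reflexivity].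
    replace (2/3 + c/A) with (2/3 + (c/3^m)/3).
    + apply cantor_prepend; auto. apply cantor_divpow; auto.
    + rewrite EAm. field. apply pow_nonzero; lra.
  - exists ((2/3 + d2/3)/B). split; [|reflexivity]. apply cantor_divpow, cantor_prepend; auto.
  - exists ((2/3 + d3/3)/B). split; [|reflexivity]. apply cantor_divpow, cantor_prepend; auto.
  - exists ((2/3 + 0/3)/B). split; [|reflexivity]. apply cantor_divpow, cantor_prepend; auto. apply cantor0.
  - rewrite Hz, <- Hg. unfold G, phi, psi, e, a, A. field. lra.
Qed.
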